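(* Let $T=\{0,\dots,N\}$ and $\mathbb{F}$ a field. Let $C_\bullet$, $C'_\bullet$ be filtrations of finite-dimensional chain complexes $C$, $C'$ over $\mathbb{F}$ with filtration compatible ordered bases $\mathfrak{C}=(c_1,\dots,c_n)$, $\mathfrak{C}'=(c'_1,\dots,c'_n)$ and filtration boundary matrices $D$, $D'$. Let $\varphi_\bullet\colon C_\bullet\to C'_\bullet$ be an injective morphism of filtrations of chain complexes with $\varphi=\varphi_N\colon C\to C'$ an isomorphism, $F$ its matrix with respect to $\mathfrak{C},\mathfrak{C}'$, and $D^{\varphi}=DF^{-1}=F^{-1}D'$. Let $V^{\varphi}$ be an invertible upper-triangular matrix such that $R^{\varphi}=D^{\varphi}V^{\varphi}$ is reduced; interpret columns of $R^{\varphi}$ as coordinate vectors with respect to $\mathfrak{C}$ and columns of $V^\varphi$ and of $FR^{\varphi}$ as coordinate vectors (elements of $C'$) with respect to $\mathfrak{C}'$. Then the family $\operatorname{cols}FR^{\varphi}$ of nonzero columns of $FR^{\varphi}$ is a filtration compatible basis for the filtration $B_*(C'_\bullet)$, $t\mapsto\partial(C'_t)$, and for all $j$ with $r^{\varphi}_j\neq 0$, \[ \operatorname{supp}_{B_*(C'_\bullet)}(Fr^{\varphi}_j)=\operatorname{supp}_{C'_\bullet}(v^{\varphi}_j). \]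
   Context: A chain complex is a finite-dimensional graded vector space with differential $\partial$ of degree $-1$, $\partial^2=0$; a filtration of chain complexes is a chain of subcomplexes $C_0\subseteq\dots\subseteq C_N=C$. Support: $\operatorname{supp}_{M_\bullet}(m)=\{t\mid m\in M_t\}$. A basis $\mathfrak{M}$ of $M_N$ is filtration compatible if $\mathfrak{M}\cap M_t$ is a basis of $M_t$ for all $t$; an ordered such basis is a filtration compatible ordered basis if $m\le m'$ implies $\operatorname{supp}(m')\subseteq\operatorname{supp}(m)$. The filtration boundary matrix is the matrix of $\partial$ in that basis. For a matrix $X$, $x_j$ is its $j$-th column, $\operatorname{cols}X$ the family of its nonzero columns; $\operatorname{piv}x_j$ is the largest row index of a nonzero entry of a nonzero column; $X$ is reduced if no two nonzero columns have the same pivot. *)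

(* Defs.v *)
(* Chain complexes are represented in coordinates with
   respect to their (ordered) bases: an n-dimensional complex C with basis
   (c_1,...,c_n) is K^n (column vectors 'cV[K]_n), c_i being the i-th standard
   basis vector, and the differential is given by its matrix D (the
   filtration boundary matrix), acting by v |-> D *m v. *)
From HB Require Import structures.
From mathcomp Require Import all_boot all_order all_algebra.
Set Implicit Arguments. Unset Strict Implicit. Unset Printing Implicit Defensive.
Import GRing.Theory.
Local Open Scope ring_scope.

Section Defs.
Variable K : fieldType.

Definition filtration (vT : vectType K) (N : nat) (M : 'I_N.+1 -> {vspace vT}) :=
  forall s t : 'I_N.+1, (s <= t)%N -> (M s <= M t)%VS.

Definition supp (vT : vectType K) (N : nat) (M : 'I_N.+1 -> {vspace vT}) (m : vT)
  : {set 'I_N.+1} := [set t | m \in M t].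

Definition filt_compatible_basis (vT : vectType K) (N : nat)
  (M : 'I_N.+1 -> {vspace vT}) (B : seq vT) :=
  basis_of (M ord_max) B /\ forall t, basis_of (M t) [seq b <- B | b \in M t].

Definition filt_compatible_ordered_basis (vT : vectType K) (N : nat)
  (M : 'I_N.+1 -> {vspace vT}) (B : seq vT) :=
  filt_compatible_basis M B /\
  forall i j : nat, (i <= j)%N -> (j < size B)%N ->
    supp M (nth 0 B j) \subset supp M (nth 0 B i).

Definition std_basis (n : nat) : seq 'cV[K]_n :=
  [seq delta_mx i 0 | i <- enum 'I_n].

Definition chain_complex (n : nat) (D : 'M[K]_n) := D *m D = 0.

Definition filtration_of_complex (n N : nat) (D : 'M[K]_n)
  (M : 'I_N.+1 -> {vspace 'cV[K]_n}) :=
  [/\ filtration M,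
      forall t v, v \in M t -> D *m v \in M t
    & M ord_max = fullv].

Definition filtration_morphism (n N : nat) (D D' : 'M[K]_n)
  (M M' : 'I_N.+1 -> {vspace 'cV[K]_n}) (F : 'M[K]_n) :=
  F *m D = D' *m F /\ forall t v, v \in M t -> F *m v \in M' t.

Definition injective_filtration_morphism (n N : nat)
  (M : 'I_N.+1 -> {vspace 'cV[K]_n}) (F : 'M[K]_n) :=
  forall t v, v \in M t -> F *m v = 0 -> v = 0.

Definition upper_trig (n : nat) (V : 'M[K]_n) :=
  forall i j : 'I_n, (j < i)%N -> V i j = 0.

Definition piv (m n : nat) (X : 'M[K]_(m, n)) (j : 'I_n) : nat :=
  \max_(i : 'I_m | X i j != 0) (i : nat).

Definition reduced (m n : nat) (X : 'M[K]_(m, n)) :=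
  forall j1 j2 : 'I_n, j1 != j2 -> col j1 X != 0 -> col j2 X != 0 ->
    piv X j1 != piv X j2.

Definition cols (m n : nat) (X : 'M[K]_(m, n)) : seq 'cV[K]_m :=
  [seq col j X | j <- enum 'I_n & col j X != 0].

Definition boundary_filtration (n N : nat) (D : 'M[K]_n)
  (M : 'I_N.+1 -> {vspace 'cV[K]_n}) : 'I_N.+1 -> {vspace 'cV[K]_n} :=
  fun t => (linfun (mulmx D) @: M t)%VS.

End Defs.

(* Main.v *)
Require Import Defs.
From HB Require Import structures.
From mathcomp Require Import all_boot all_order all_algebra.
Import GRing.Theory.
Local Open Scope ring_scope.
Set Implicit Arguments. Unset Strict Implicit.

Lemma col_nz_piv (K : fieldType) n (R : 'M[K]_n) (i : 'I_n) :
  col i R != 0 -> exists2 p : 'I_n, R p i != 0 & (p : nat) = piv R i.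
Proof.
move=> nz.
have [k hk] : exists k, R k i != 0.
  apply/existsP; apply: contraR nz; rewrite negb_exists => /forallP h.
  apply/eqP/colP => k0; rewrite !mxE; exact/eqP/negPn/(h k0).
have : (0 < #|[pred k | R k i != 0%R]|)%N by apply/card_gt0P; exists k.
move=> /(eq_bigmax_cond (fun k : 'I_n => (k : nat))) [p hp e].
exists p => //; rewrite /piv -e; apply: eq_bigl => x; by [].
Qed.

Lemma le_piv (K : fieldType) n (R : 'M[K]_n) (i p : 'I_n) :
  R p i != 0 -> (p <= piv R i)%N.
Proof. by move=> h; rewrite /piv (@leq_bigmax_cond _ _ (fun k : 'I_n => (k : nat)) _ h). Qed.

Lemma red_ker (K : fieldType) n (R : 'M[K]_n) (z : 'cV[K]_n) :
  reduced R -> R *m z = 0 -> forall i, col i R != 0 -> z i 0 = 0.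
Proof.
move=> red Rz i nzi; apply/eqP; apply/negPn/negP => zi.
pose S := [pred i | (col i R != 0) && (z i 0 != 0)].
have Si : S i by rewrite /S /= nzi.
case: (arg_maxnP (piv R) Si) => i0 /andP[nz0 z0] mx.
have [p Rp ep] := col_nz_piv nz0.
have : (R *m z) p 0 = 0 by rewrite Rz mxE.
rewrite !mxE (bigD1 i0) //= big1 ?addr0.
  by move/eqP; rewrite mulf_eq0 (negPf Rp) (negPf z0).
move=> j nj; apply/eqP; rewrite mulf_eq0; apply/negPn/negP.
rewrite negb_or => /andP[Rpj zj].
have nzj : col j R != 0.
  by apply: contraNneq Rpj => /colP/(_ p); rewrite !mxE => ->.
have hle : (piv R j <= piv R i0)%N := mx j (introT andP (conj nzj zj)).
have := le_piv Rpj; rewrite ep => hge.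
have : piv R j = piv R i0 by apply/eqP; rewrite eqn_leq hle hge.
by apply/eqP; apply: red.
Qed.

Section C.
Variables (K : fieldType) (N n : nat) (M : 'I_N.+1 -> {vspace 'cV[K]_n}).
Hypothesis ob : filt_compatible_ordered_basis M (std_basis K n).

Lemma nth_std (i : 'I_n) : nth 0 (std_basis K n) i = delta_mx i 0.
Proof.
rewrite /std_basis (nth_map i) ?size_enum_ord ?ltn_ord //.
by rewrite nth_ord_enum.
Qed.

Lemma downC t (i j : 'I_n) : (i <= j)%N -> delta_mx j 0 \in M t -> delta_mx i 0 \in M t.
Proof.
case: ob => _ ord hij hj.
have := ord i j hij; rewrite size_map size_enum_ord ltn_ord => /(_ isT).
rewrite !nth_std => /subsetP /(_ t); rewrite !inE; exact.
Qed.

Lemma memC t (x : 'cV[K]_n) :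
  x \in M t <-> (forall i, x i 0 != 0 -> delta_mx i 0 \in M t).
Proof.
split.
  case: ob => [[_ /(_ t) /andP [/eqP sp _]] _] hx i.
  apply: contraTT => ni; rewrite negbK; apply/eqP.
  move: hx; rewrite -sp => /(coord_span (X := in_tuple _)) ->.
  rewrite summxE big1 // => k _; rewrite mxE.
  set X := [seq _ <- _ | _].
  have : X`_k \in X by apply: mem_nth; case: k => k /= ->.
  rewrite mem_filter => /andP [hm /mapP [l _ el]].
  rewrite el mxE; case: eqP => [e|]; last by rewrite mulr0.
  by move: hm; rewrite el -e (negPf ni).
move=> h.
rewrite [x]matrix_sum_delta; apply: memv_suml => i _.
rewrite big_ord1; case: (eqVneq (x i 0) 0) => [->|nz].
  by rewrite scale0r mem0v.
by apply: memvZ; rewrite (ord1 _); apply: h.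
Qed.
End C.

Unset Implicit Arguments.
Theorem lemma3p7 (K : fieldType) (N n : nat)
  (D D' : 'M[K]_n) (C C' : 'I_N.+1 -> {vspace 'cV[K]_n})
  (F V : 'M[K]_n) :
  chain_complex D -> chain_complex D' ->
  filtration_of_complex D C -> filtration_of_complex D' C' ->
  filt_compatible_ordered_basis C (std_basis K n) ->
  filt_compatible_ordered_basis C' (std_basis K n) ->
  filtration_morphism D D' C C' F ->
  injective_filtration_morphism C F ->
  F \in unitmx ->
  upper_trig V -> V \in unitmx ->
  reduced (D *m invmx F *m V) ->
  let R := D *m invmx F *m V in
  filt_compatible_basis (boundary_filtration D' C') (cols (F *m R)) /\
  forall j : 'I_n, col j R != 0 ->
    supp (boundary_filtration D' C') (col j (F *m R)) = supp C' (col j V).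
Proof.
move=> _ _ _ [_ _ topC'] _ obC' [FD _] _ uF upV uV red R.
have FR : F *m R = D' *m V.
  by rewrite /R !mulmxA FD mulmxK.
pose g j := col j (F *m R).
have gE j : g j = D' *m col j V by rewrite /g FR !colE mulmxA.
have gE' j : g j = F *m col j R by rewrite /g !colE mulmxA.
have Finj x : F *m x = 0 -> x = 0.
  by move=> h; rewrite -(mulKmx uF x) h mulmx0.
have Vstab t x : x \in C' t -> V *m x \in C' t.
  move/(memC obC') => hx; apply/(memC obC') => i.
  rewrite mxE; apply: contraR => ni; apply/eqP; apply: big1 => k _.
  apply/eqP; rewrite mulf_eq0; apply/negPn/negP; rewrite negb_or => /andP [vik xk].
  case: (leqP i k) => hik.
    by move: ni; rewrite (downC obC' hik (hx k xk)).
  by rewrite (upV _ _ hik) eqxx in vik.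
have colV t (j : 'I_n) : delta_mx j 0 \in C' t -> col j V \in C' t.
  move=> hj; apply/(memC obC') => i; rewrite mxE => vij.
  case: (leqP i j) => hij; first exact: (@downC K N n C' obC' t i j hij hj).
  by rewrite (upV _ _ hij) eqxx in vij.
have surj t w : w \in C' t -> exists2 u, u \in C' t & w = V *m u.
  pose f : 'End('cV[K]_n) := linfun (mulmx V).
  have sub : (f @: C' t <= C' t)%VS.
    by apply/subvP => y /memv_imgP [x hx ->]; rewrite lfunE /=; apply: Vstab.
  have ker : lker f == 0%VS.
    apply/lker0P => x y; rewrite !lfunE /= => e.
    by rewrite -(mulKmx uV x) e mulKmx.
  have e : (f @: C' t)%VS = C' t.
    by apply/eqP; rewrite eqEdim sub limg_dim_eq ?(eqP ker) ?capv0 ?leqnn.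
  by move=> hw; move: hw; rewrite -{1}e => /memv_imgP [u hu ->]; exists u; rewrite ?lfunE.
have memBd t y : y \in boundary_filtration D' C' t <-> exists2 w, w \in C' t & y = D' *m w.
  split; first by move/memv_imgP => [w hw ->]; exists w; rewrite ?lfunE.
  by move=> [w hw ->]; rewrite /boundary_filtration -[D' *m w](lfunE (mulmx D')); apply: memv_img.
have suppj t (j : 'I_n) : col j R != 0 -> (g j \in boundary_filtration D' C' t) = (col j V \in C' t).
  move=> nzj; apply/idP/idP; last first.
    by move=> h; apply/memBd; exists (col j V); rewrite ?gE.
  move/memBd => [w hw]; rewrite gE => ew.
  have [u hu wu] := surj t w hw.
  pose z := delta_mx j 0 - u.
  have Rz : R *m z = 0.
    apply: Finj; rewrite mulmxA FR /z mulmxBr -[D' *m V *m delta_mx j 0]mulmxA -colE ew wu mulmxA subrr //.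
  have := red_ker red Rz nzj.
  rewrite /z !mxE eqxx /= => /eqP; rewrite subr_eq0 => /eqP u1.
  apply: colV; apply: (proj1 (memC obC' _ _) hu); by rewrite -u1 oner_neq0.
have freeg : forall s : seq 'I_n, uniq s -> all (fun j => col j R != 0) s -> free (map g s).
  elim=> [|j s IH] /=; first by rewrite nil_free.
  move=> /andP [js us] /andP [nzj nzs]; rewrite free_cons IH // andbT.
  apply/negP => /(free_span (IH us nzs)) [k ek _].
  rewrite big_map in ek.
  pose z : 'cV[K]_n := delta_mx j 0 - \sum_(i <- s) k (g i) *: delta_mx i 0.
  have Rz : R *m z = 0.
    apply: Finj; rewrite /z mulmxBr mulmx_sumr mulmxBr mulmx_sumr.
    under eq_bigr => i _ do rewrite -scalemxAr -scalemxAr -colE -gE'.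
    by rewrite -colE -gE' -ek subrr.
  have := red_ker red Rz nzj.
  rewrite /z !mxE summxE big1_seq ?eqxx ?subr0 /=.
    by move/eqP; rewrite oner_eq0.
  move=> i is_; rewrite !mxE.
  by case: eqP => [e|]; [move: js; rewrite e is_ | rewrite mulr0].
split; last first.
  move=> j nzj; apply/setP => t; rewrite /supp !inE; exact: (suppj t j nzj).
have basis_t t : basis_of (boundary_filtration D' C' t)
    [seq b <- cols (F *m R) | b \in boundary_filtration D' C' t].
  rewrite /cols filter_map.
  set s := [seq _ <- _ | _].
  have us : uniq s.
    rewrite /s; do ! apply: filter_uniq; by rewrite -enumT enum_uniq.
  have nzs : all (fun j => col j R != 0) s.
    apply/allP => j; rewrite !mem_filter => /and3P [_ h _].
    by apply: contraNneq h => e; rewrite -/(g j) gE' e mulmx0.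
  rewrite /basis_of freeg // andbT eqEsubv; apply/andP; split.
    by apply/span_subvP => y /mapP [j]; rewrite !mem_filter => /and3P [hb _ _] ->.
  apply/subvP => y /memBd [w hw ->].
  have [u hu ->] := surj t w hw.
  have ue : u = \sum_i u i 0 *: delta_mx i 0.
    by rewrite {1}[u]matrix_sum_delta; apply: eq_bigr => i _; rewrite big_ord1.
  rewrite ue mulmx_sumr mulmx_sumr; apply: memv_suml => i _.
  rewrite -!scalemxAr -colE -gE.
  case: (eqVneq (u i 0) 0) => [->|nz]; first by rewrite scale0r mem0v.
  apply: memvZ.
  have hi : g i \in boundary_filtration D' C' t.
    apply/memBd; exists (col i V) => //; apply: colV.
    exact: (proj1 (memC obC' _ _) hu).
  case: (eqVneq (col i R) 0) => [e|nzi]; first by rewrite gE' e mulmx0 mem0v.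
  apply: memv_span; apply: map_f; rewrite !mem_filter hi -enumT mem_enum andbT /=.
  by apply: contra nzi; rewrite -/(g i) gE' => /eqP /Finj ->.
split; last exact: basis_t.
have e : [seq b <- cols (F *m R) | b \in boundary_filtration D' C' ord_max] = cols (F *m R).
  apply/all_filterP/allP => y /mapP [j _ ->]; apply/memBd; exists (col j V).
    by rewrite topC' memvf.
  exact: gE.
by rewrite -e; apply: basis_t.
Qed.
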